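(* Let $R=K[x_1,\ldots,x_n]$ over a field $K$, let $I\subset R$ be a square-free monomial ideal, $\mathfrak{p}\subset R$ a monomial prime ideal, and let $\{u_1,\ldots,u_{\beta_1(I)}\}\subseteq\mathcal{G}(I)$ be an independent set of maximum cardinality $\beta_1(I)$. Suppose that for some positive integer $s$ we have $\mathfrak{p}\setminus x_i\notin\mathrm{Ass}(R/(I\setminus x_i)^s)$ for every variable $x_i$ dividing $\prod_{j=1}^{\beta_1(I)}u_j$. If $\mathfrak{p}\in\mathrm{Ass}(R/I^s)$, then $s\geq\beta_1(I)+1$.
   Context: $\mathcal{G}(I)$ is the minimal monomial generating set of $I$. A subset $\Gamma\subseteq\mathcal{G}(I)$ is independent if $\gcd(f,g)=1$ for all distinct $f,g\in\Gamma$; $\beta_1(I)$ is the maximum cardinality of an independent set in $I$. The deletion $I\setminus x_i$ is the monomial ideal generated by those $u\in\mathcal{G}(I)$ with $x_i\nmid u$; for a monomial prime $\mathfrak{p}$, $\mathfrak{p}\setminus x_i$ is generated by the variables of $\mathfrak{p}$ other than $x_i$. *)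

(* Defs.v *)
From mathcomp Require Import all_boot all_algebra.
From mathcomp Require Import mpoly.

Set Implicit Arguments.
Unset Strict Implicit.
Unset Printing Implicit Defensive.

Import GRing.Theory.
Local Open Scope ring_scope.

Section Defs.
Variables (K : fieldType) (n : nat).

Definition ideal_of := {mpoly K[n]} -> Prop.

Definition ideal_gen (P : ideal_of) : ideal_of := fun f =>
  exists l : seq ({mpoly K[n]} * {mpoly K[n]}),
    (forall p, p \in l -> P p.2) /\ f = \sum_(p <- l) p.1 * p.2.

Definition ideal_pow (J : ideal_of) (s : nat) : ideal_of :=
  ideal_gen (fun f => exists fs : s.-tuple {mpoly K[n]},
                (forall g, g \in fs -> J g) /\ f = \prod_(g <- fs) g).

Definition sqf_mono (S : {set 'I_n}) : {mpoly K[n]} := \prod_(i in S) 'X_i.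

(* The square-free monomial ideal with generating set G (each generator
   x^S is recorded by its support S). *)
Definition sqf_ideal (G : {set {set 'I_n}}) : ideal_of :=
  ideal_gen (fun f => exists2 S, S \in G & f = sqf_mono S).

Definition minimal_gens (G : {set {set 'I_n}}) : bool :=
  [forall S in G, forall T in G, (S \subset T) ==> (S == T)].

(* Gamma is independent: gcd(x^S, x^T) = 1, i.e. S and T disjoint,
   for distinct S, T in Gamma. *)
Definition independent (Gamma : {set {set 'I_n}}) : bool :=
  [forall S in Gamma, forall T in Gamma, (S != T) ==> [disjoint S & T]].

Definition beta1 (G : {set {set 'I_n}}) : nat :=
  \max_(Gamma : {set {set 'I_n}} | (Gamma \subset G) && independent Gamma)
     #|Gamma|.

(* Deletion I \ x_i: generators of G(I) not divisible by x_i. *)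
Definition del_gens (G : {set {set 'I_n}}) (i : 'I_n) : {set {set 'I_n}} :=
  [set S in G | i \notin S].

Definition mono_prime (P : {set 'I_n}) : ideal_of :=
  ideal_gen (fun f => exists2 i, i \in P & f = 'X_i).

Definition prime_ideal (Q : ideal_of) : Prop :=
  [/\ Q 0,
      (forall f g, Q f -> Q g -> Q (f + g)),
      (forall r f, Q f -> Q (r * f)),
      ~ Q 1 &
      (forall f g, Q (f * g) -> Q f \/ Q g)].

(* Q in Ass(R/J): Q is a prime ideal equal to (J : f) = Ann(f + J)
   for some f in R. *)
Definition in_Ass (J Q : ideal_of) : Prop :=
  prime_ideal Q /\ exists f : {mpoly K[n]}, forall g, Q g <-> J (g * f).

End Defs.

Arguments sqf_ideal K {n} G _.
Arguments mono_prime K {n} P _.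

(* Main.v *)
Require Import Defs.
From mathcomp Require Import all_boot all_algebra.
From mathcomp Require Import mpoly.
From Stdlib Require Import Classical.
From mathcomp Require Import ring.
Set Implicit Arguments.
Unset Strict Implicit.
Unset Printing Implicit Defensive.
Import GRing.Theory.
Local Open Scope ring_scope.


Section Gen.
Variables (K : fieldType) (n : nat).
Local Notation R := {mpoly K[n]}.
Implicit Types (Gen : ideal_of K n) (D : pred 'X_{1..n}).

Lemma ig0 Gen : ideal_gen Gen 0.
Proof. by exists [::]; rewrite big_nil. Qed.

Lemma igD Gen f g : ideal_gen Gen f -> ideal_gen Gen g -> ideal_gen Gen (f + g).
Proof.
case=> l1 [H1 ->] [l2 [H2 ->]]; exists (l1 ++ l2); rewrite big_cat; split=> //.
by move=> p; rewrite mem_cat => /orP[/H1|/H2].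
Qed.

Lemma igM Gen r f : ideal_gen Gen f -> ideal_gen Gen (r * f).
Proof.
case=> l [H ->]; exists [seq (r * p.1, p.2) | p <- l]; split.
  by move=> p /mapP[q /H ? ->].
by rewrite big_map mulr_sumr; apply: eq_bigr => p _; rewrite mulrA.
Qed.

Lemma igG Gen g : Gen g -> ideal_gen Gen g.
Proof.
by move=> H; exists [:: (1, g)]; rewrite big_seq1 mul1r; split=> // p; rewrite mem_seq1 => /eqP ->.
Qed.

Lemma igN Gen f : ideal_gen Gen f -> ideal_gen Gen (- f).
Proof. by move=> H; rewrite -mulN1r; apply: igM. Qed.

Lemma ig_sum Gen (T : Type) (r : seq T) (F : T -> R) :
  (forall x, ideal_gen Gen (F x)) -> ideal_gen Gen (\sum_(x <- r) F x).
Proof.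
move=> H; elim: r => [|x r IH]; first by rewrite big_nil; apply: ig0.
by rewrite big_cons; apply: igD.
Qed.

Definition upc D := forall m m', D m -> D (m + m')%MM.

Lemma gen_char Gen D : upc D ->
  (forall g, Gen g -> all D (msupp g)) ->
  (forall m, D m -> ideal_gen Gen 'X_[m]) ->
  forall f : R, ideal_gen Gen f <-> all D (msupp f).
Proof.
move=> uD HG HX f; split.
  case=> l [H ->]; apply/allP => m.
  elim: l H => [|p l IH] H; first by rewrite big_nil msupp0.
  rewrite big_cons => /msuppD_le; rewrite mem_cat => /orP[|]; last first.
    by apply: IH => q ql; apply: H; rewrite inE ql orbT.
  move/msuppM_le => /allpairsP [[m1 m2] /= [_ Hm2 ->]].
  rewrite addmC; apply: uD.
  by have /allP := HG _ (H p (mem_head _ _)); apply.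
move=> /allP Hf; rewrite (mpolyE f); apply: ig_sum => m.
case: (boolP (m \in msupp f)) => Hm; last first.
  by rewrite (memN_msupp_eq0 Hm) scale0r; apply: ig0.
by rewrite -mul_mpolyC; apply: igM; apply: HX; apply: Hf.
Qed.

End Gen.


Section Spec.
Variables (K : fieldType) (n : nat).
Local Notation R := {mpoly K[n]}.

Definition hit (P : {set 'I_n}) (m : 'X_{1..n}) := [exists k in P, (0 < m k)%N].

Lemma hitD P a b : hit P (a + b)%MM = hit P a || hit P b.
Proof.
apply/existsP/orP.
  by case=> k /andP[kP]; rewrite mnmDE addn_gt0 => /orP[] H; [left|right];
    apply/existsP; exists k; rewrite kP.
by case=> /existsP[k /andP[kP H]]; exists k; rewrite kP mnmDE addn_gt0 H //= orbT.
Qed.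

Lemma hit0 P : hit P 0%MM = false.
Proof. by apply/existsP => -[k]; rewrite mnm0E andbF. Qed.

Lemma lem_add2 (a b c d : 'X_{1..n}) : (a <= b)%MM -> (c <= d)%MM -> (a + c <= b + d)%MM.
Proof.
move=> /mnm_lepP H1 /mnm_lepP H2; apply/mnm_lepP => i; rewrite !mnmDE.
exact: leq_add.
Qed.

Lemma prime_char P (f : R) : mono_prime K P f <-> all (hit P) (msupp f).
Proof.
apply: gen_char.
- by move=> m m' H; rewrite hitD H.
- by move=> g [i iP ->]; rewrite msuppX /= andbT; apply/existsP; exists i;
    rewrite iP mnm1E eqxx.
- move=> m /existsP[k /andP[kP Hk]].
  have -> : m = ((m - U_(k)) + U_(k))%MM by rewrite submK // lep1mP -lt0n.
  by rewrite mpolyXD; apply: igM; apply: igG; exists k.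
Qed.

Definition chi (S : {set 'I_n}) : 'X_{1..n} := [multinom ((i \in S) : nat) | i < n].

Lemma sqf_monoE S : sqf_mono K S = 'X_[chi S].
Proof.
rewrite /sqf_mono mpolyXE_id [RHS](bigID (fun i => i \in S)) /=.
rewrite [X in _ * X]big1 ?mulr1; last by move=> i /negbTE H; rewrite mnmE H expr0.
by apply: eq_bigr => i H; rewrite mnmE H expr1.
Qed.

Definition D1 (G : {set {set 'I_n}}) m := [exists S in G, chi S <= m]%MM.

Lemma sqf_char (G : {set {set 'I_n}}) (f : R) : sqf_ideal K G f <-> all (D1 G) (msupp f).
Proof.
apply: gen_char.
- move=> m m' /existsP[S /andP[SG H]]; apply/existsP; exists S; rewrite SG.
  exact: lepm_trans H (lem_addr _ _).
- by move=> g [S SG ->]; rewrite sqf_monoE msuppX /= andbT; apply/existsP;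
    exists S; rewrite SG lepm_refl.
- move=> m /existsP[S /andP[SG H]].
  have -> : m = ((m - chi S) + chi S)%MM by rewrite submK.
  by rewrite mpolyXD; apply: igM; apply: igG; exists S; rewrite // sqf_monoE.
Qed.

Definition msum (t : seq {set 'I_n}) := \big[+%MM/0%MM]_(S <- t) chi S.

Definition Ds (G : {set {set 'I_n}}) s m :=
  [exists t : s.-tuple {set 'I_n}, all (fun S => S \in G) t && (msum t <= m)%MM].

Lemma Ds_seq (G : {set {set 'I_n}}) s m : Ds G s m = false -> forall t : seq {set 'I_n},
  size t = s -> all (fun S => S \in G) t -> (msum t <= m)%MM -> False.
Proof.
move=> /negbT /existsPn H t st tG tm.
have st' : size t == s by rewrite st.
by move: (H (Tuple st')); rewrite /= tG tm.
Qed.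

Lemma Ds_seqP (G : {set {set 'I_n}}) s m (t : seq {set 'I_n}) :
  size t = s -> all (fun S => S \in G) t -> (msum t <= m)%MM -> Ds G s m.
Proof.
move=> st tG tm; case E: (Ds G s m) => //; exfalso; exact: Ds_seq E t st tG tm.
Qed.

Lemma prod_supp (G : {set {set 'I_n}}) (l : seq R) :
  (forall g, g \in l -> all (D1 G) (msupp g)) ->
  forall m, m \in msupp (\prod_(g <- l) g) -> Ds G (size l) m.
Proof.
elim: l => [|x l IH] Hl m.
  rewrite big_nil msupp1 mem_seq1 => /eqP ->.
  by apply: (@Ds_seqP _ _ _ [::]) => //; rewrite /msum big_nil lepm_refl.
rewrite big_cons => /msuppM_le /allpairsP [[m1 m2] /= [H1 H2 ->]].
have /allP /(_ _ H1) /existsP [S /andP[SG HS]] := Hl x (mem_head _ _).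
have /existsP [t /andP[tG Ht]] :=
  IH (fun y yl => Hl y (@mem_behead _ (x :: l) _ yl)) m2 H2.
apply: (@Ds_seqP _ _ _ (S :: t)); first by rewrite /= size_tuple.
  by rewrite /= SG.
by rewrite /msum big_cons; apply: lem_add2.
Qed.

Lemma pow_char (G : {set {set 'I_n}}) s (f : R) : ideal_pow (sqf_ideal K G) s f <-> all (Ds G s) (msupp f).
Proof.
apply: gen_char.
- move=> m m' /existsP[t /andP[tG H]]; apply/existsP; exists t; rewrite tG.
  exact: lepm_trans H (lem_addr _ _).
- move=> g [fs [Hfs ->]]; apply/allP => m.
  have := @prod_supp G (fs : seq R) (fun x xl => proj1 (sqf_char G x) (Hfs x xl)) m.
  by rewrite size_tuple.
- move=> m /existsP[t /andP[tG H]].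
  have -> : m = ((m - msum t) + msum t)%MM by rewrite submK.
  rewrite mpolyXD; apply: igM; apply: igG.
  exists (map_tuple (@sqf_mono K n) t); split.
    move=> g /mapP[S St ->]; apply: igG; exists S => //.
    by move/allP: tG; apply.
  by rewrite big_map /msum -mprodXE; apply: eq_bigr => S _; rewrite sqf_monoE.
Qed.

End Spec.


Section Prime.
Variables (K : fieldType) (n : nat).
Local Notation R := {mpoly K[n]}.



Lemma mono_prime_prime (Q : {set 'I_n}) : prime_ideal (mono_prime K Q).
Proof.
split.
- exact: ig0.
- exact: igD.
- exact: igM.
- by rewrite prime_char msupp1 /= hit0.
move=> f g Hfg.
rewrite !prime_char.
case Hf: (all (hit Q) (msupp f)); first by left.
case Hg: (all (hit Q) (msupp g)); first by right.
exfalso.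
pose sp (p : R) (b : bool) := \sum_(m <- [seq m <- msupp p | hit Q m == b]) p@_m *: 'X_[m].
have Hsplit : forall p : R, p = sp p true + sp p false.
  move=> p; rewrite /sp !big_filter {1}(mpolyE p) (bigID (hit Q)) /=.
  by congr (_ + _); apply: eq_bigl => m; case: (hit Q m).
have Htrue : forall p : R, mono_prime K Q (sp p true).
  move=> p; apply/prime_char; apply/allP => m /msupp_sum_le /flattenP [ms].
  case/mapP => m' /= ; rewrite filter_predT mem_filter => /andP[/eqP Hm' _] ->.
  by move/msuppZ_le; rewrite msuppX mem_seq1 => /eqP ->.
have Hfalse : forall p : R, perm_eq (msupp (sp p false)) [seq m <- msupp p | hit Q m == false].
  move=> p; apply: msupp_sumX; first by rewrite filter_uniq // msupp_uniq.
  by move=> m; rewrite mem_filter => /andP[_]; rewrite mcoeff_msupp.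
have Hnz : forall p : R, all (hit Q) (msupp p) = false -> sp p false != 0.
  move=> p Hp; rewrite -msupp_eq0 -size_eq0 (perm_size (Hfalse p)) size_eq0.
  move/negbT: Hp; rewrite -has_predC has_filter.
  by apply: contraNN => /eqP E; apply/eqP; rewrite -E; apply: eq_filter => m /=; case: hit.
have Hprod : mono_prime K Q (sp f false * sp g false).
  have -> : sp f false * sp g false =
     f * g - (g * sp f true) - (sp f false * sp g true).
    have Ef := Hsplit f; have Eg := Hsplit g.
    move: Ef Eg; move: (sp f true) (sp f false) (sp g true) (sp g false) => a b c d Ef Eg.
    rewrite Ef Eg; ring.
  apply: igD; last first.
    by apply: igN; apply: igM; apply: Htrue.
  apply: igD; first exact: Hfg.
  by apply: igN; apply: igM; apply: Htrue.
have nz := mulf_neq0 (Hnz _ Hf) (Hnz _ Hg).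
move: nz; rewrite -msupp_eq0; case E: (msupp _) => [|m ms] // _.
have : m \in msupp (sp f false * sp g false) by rewrite E mem_head.
move=> Hm; move/prime_char/allP/(_ _ Hm): Hprod.
move/msuppM_le: Hm => /allpairsP [[m1 m2] /= [H1 H2 ->]].
rewrite (perm_mem (Hfalse f)) mem_filter in H1.
rewrite (perm_mem (Hfalse g)) mem_filter in H2.
case/andP: H1 => /eqP H1 _; case/andP: H2 => /eqP H2 _.
by rewrite hitD H1 H2.
Qed.

End Prime.


Section Step1.
Variable n : nat.

Lemma count_lt (T : eqType) (a b : pred T) (r : seq T) x0 :
  (forall x, a x -> b x) -> x0 \in r -> b x0 -> ~~ a x0 -> (count a r < count b r)%N.
Proof.
move=> ab; elim: r => [|y r IH] //=; rewrite inE => /orP[/eqP <-|xr] bx ax.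
  by rewrite (negbTE ax) bx add0n add1n ltnS; apply: sub_count.
have := IH xr bx ax; case ay: (a y); first by rewrite (ab _ ay) !add1n ltnS.
by rewrite add0n => H; apply: leq_trans H (leq_addl _ _).
Qed.

Lemma step1 (h D : pred 'X_{1..n}) : upc D ->
  (forall a b, h (a + b)%MM = h a || h b) -> h 0%MM = false ->
  forall r : seq 'X_{1..n}, (forall w, h w = all (fun m => D (w + m)%MM) r) ->
  exists m0, forall w, h w = D (w + m0)%MM.
Proof.
move=> uD hD h0 r.
move: (leqnn (count (predC D) r)); move: {2}(count _ r) => k.
elim: k r => [|k IH] r Hk Hr.
  have := Hr 0%MM; rewrite h0 => /esym /negbT; rewrite -has_predC => /hasP[m mr Hm].
  have : has (predC D) r by apply/hasP; exists m; rewrite //= -(add0m m).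
  by rewrite has_count; move: Hk; rewrite leqn0 => /eqP ->.
have := Hr 0%MM; rewrite h0 => /esym /negbT; rewrite -has_predC => /hasP[m mr Hm].
rewrite /= add0m in Hm.
case: (classic (exists m w, [/\ m \in r, ~~ D m, ~~ h w & D (w + m)%MM])).
  case=> m1 [w [m1r Dm1 hw Dwm1]].
  apply: (IH [seq (w + m)%MM | m <- r]).
    rewrite count_map -ltnS; apply: leq_trans Hk.
    apply: (count_lt (x0 := m1)) => //=; last by rewrite Dwm1.
    by move=> x; apply: contra => Dx; rewrite addmC; apply: uD.
  move=> w'; rewrite all_map; rewrite (_ : h w' = h (w' + w)%MM); last first.
    by rewrite hD (negbTE hw) orbF.
  rewrite Hr; apply: eq_all => x /=; by rewrite addmA.
move=> Hn; exists m => w; case hw: (h w).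
  by move/esym: (Hr w); rewrite hw => /allP /(_ _ mr).
apply/esym/negP => Dwm; apply: Hn; exists m, w; split => //; by rewrite hw.
Qed.

End Step1.


Lemma msumE n (t : seq {set 'I_n}) k : msum t k = count (fun S : {set 'I_n} => k \in S) t.
Proof.
elim: t => [|S t IH]; first by rewrite /msum big_nil mnm0E.
by rewrite /msum big_cons mnmDE -/(msum t) IH mnmE.
Qed.

Lemma count_eq0 (T : Type) (a : pred T) s : (count a s == 0%N) = ~~ has a s.
Proof. by rewrite has_count -eqn0Ngt. Qed.

Lemma iffb (a b : bool) : (a <-> b) -> a = b.
Proof. by case: a; case: b => // -[H1 H2]; [move: (H1 isT)|move: (H2 isT)]. Qed.

Theorem corollary2p3 (K : fieldType) (n : nat)
    (G : {set {set 'I_n}}) (P : {set 'I_n})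
    (U : {set {set 'I_n}}) (s : nat) :
  minimal_gens G ->
  U \subset G -> independent U -> #|U| = beta1 G ->
  (0 < s)%N ->
  (forall i : 'I_n, i \in \bigcup_(S in U) S ->
     ~ in_Ass (ideal_pow (sqf_ideal K (del_gens G i)) s)
              (mono_prime K (P :\ i))) ->
  in_Ass (ideal_pow (sqf_ideal K G) s) (mono_prime K P) ->
  (beta1 G + 1 <= s)%N.
Proof.
move=> _ UG indU cardU _ Hdel [pr [f Hf]].
rewrite -cardU addn1; case: (ltnP #|U| s) => // sU; exfalso.
have Hr : forall w, hit P w = all (fun m => Ds G s (w + m)%MM) (msupp f).
  move=> w; apply: iffb; have := Hf 'X_[w].
  rewrite prime_char pow_char msuppX /= andbT mulrC (perm_all _ (msuppMX f w)).
  rewrite (all_map (fun m' => (w + m')%MM) (Ds G s) (msupp f)).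
  by [].
have uD : upc (Ds G s).
  move=> m m' /existsP[t /andP[tG H]]; apply/existsP; exists t; rewrite tG.
  exact: lepm_trans H (lem_addr _ _).
have [m0 Hm0] := step1 uD (@hitD n P) (hit0 P) Hr.
have nD : Ds G s m0 = false by rewrite -(add0m m0) -Hm0 hit0.
have pos : forall i, i \in \bigcup_(S in U) S -> (0 < m0 i)%N.
  move=> i iU; rewrite lt0n; apply/negP => /eqP mi0; apply: (Hdel i iU); split.
    exact: mono_prime_prime.
  exists 'X_[m0] => g; rewrite prime_char pow_char (perm_all _ (msuppMX g m0)).
  rewrite (all_map (fun m' => (m0 + m')%MM) (Ds (del_gens G i) s) (msupp g)).
  suff E : forall w, hit (P :\ i) w = Ds (del_gens G i) s (m0 + w)%MM.
    by rewrite (eq_all E).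
  move=> w; pose w' := [multinom (if k == i then 0%N else w k) | k < n].
  have -> : hit (P :\ i) w = hit P w'.
    apply/existsP/existsP.
      case=> k /andP[]; rewrite in_setD1 => /andP[ki kP] H; exists k.
      by rewrite kP mnmE (negbTE ki).
    case=> k /andP[kP]; rewrite mnmE; case: eqP => // /eqP ki H; exists k.
    by rewrite in_setD1 ki kP.
  rewrite Hm0; apply/existsP/existsP => -[t /andP[tG tm]]; exists t.
    have ti : forall S, S \in (t : seq _) -> i \notin S.
      have : (msum t i <= (w' + m0)%MM i)%N by move/mnm_lepP: tm; apply.
      rewrite mnmDE mnmE eqxx mi0 msumE leqn0 count_eq0 => /hasPn; apply.
    apply/andP; split.
      apply/allP => S St; rewrite inE ti // andbT.
      by move/allP: tG; apply.
    apply/mnm_lepP => k; case: (k =P i) => [->|/eqP ki].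
      rewrite msumE; have -> : count (fun S : {set 'I_n} => i \in S) (t : seq _) = 0%N.
        by apply/eqP; rewrite count_eq0; apply/hasPn.
      by [].
    move/mnm_lepP: tm => /(_ k); rewrite !mnmDE mnmE (negbTE ki) addnC; by [].
  have ti : forall S, S \in (t : seq _) -> i \notin S.
    by move=> S St; move/allP: tG => /(_ _ St); rewrite inE => /andP[].
  apply/andP; split.
    apply/allP => S St; move/allP: tG => /(_ _ St); rewrite inE => /andP[]; by [].
  apply/mnm_lepP => k; case: (k =P i) => [->|/eqP ki].
    rewrite msumE; have -> : count (fun S : {set 'I_n} => i \in S) (t : seq _) = 0%N.
      by apply/eqP; rewrite count_eq0; apply/hasPn.
    by [].
  move/mnm_lepP: tm => /(_ k); rewrite !mnmDE mnmE (negbTE ki) addnC; by [].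
have indP : forall S T, S \in U -> T \in U -> S != T -> [disjoint S & T].
  move=> S T SU TU ne; move/forall_inP: indU => /(_ S SU) /forall_inP /(_ T TU).
  by move/implyP; apply.
have cnt1 : forall (k : 'I_n) (t : seq {set 'I_n}), uniq t -> {subset t <= U} ->
    (count (fun S : {set 'I_n} => k \in S) t <= 1)%N.
  move=> k; elim=> [|S t IH] //= /andP[St ut] sub.
  case kS: (k \in S) => /=.
    rewrite add1n ltnS leqn0 count_eq0; apply/hasPn => T Tt.
    have ne : S != T by apply: contraNneq St => ->.
    have := indP S T (sub S (mem_head _ _)) (sub T (@mem_behead _ (S :: t) _ Tt)) ne.
    by move/disjointFr => /(_ _ kS) ->.
  by rewrite add0n; apply: IH => // T Tt; apply: sub; rewrite inE Tt orbT.
pose t := take s (enum U).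
have tU : {subset t <= U} by move=> S /mem_take; rewrite mem_enum.
apply: (Ds_seq nD (t := t)).
- by rewrite size_takel // -cardE.
- by apply/allP => S /tU; apply: (subsetP UG).
apply/mnm_lepP => k; rewrite msumE.
have ut : uniq t by apply: take_uniq; apply: enum_uniq.
case: (boolP (k \in \bigcup_(S in U) S)) => kU.
  exact: leq_trans (cnt1 k t ut tU) (pos k kU).
have -> : count (fun S : {set 'I_n} => k \in S) t = 0%N; last by [].
apply/eqP; rewrite count_eq0; apply/hasP => -[S St kS]; move/negP: kU; apply.
by apply/bigcupP; exists S => //; apply: tU.
Qed.
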